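(* Let $k$ be a nonnegative integer. Then there exist rational numbers $\xi_0,\dots,\xi_{k-1}$ (depending only on $k$) such that for every strict partition $\lambda$, with inner corner contents $x_0,\dots,x_m$, and every $i\in\{0,\dots,m\}$ for which $\lambda^{i+}$ is defined, $$q_k(\lambda^{i+})-q_k(\lambda)=\sum_{j=0}^{k-1}\xi_j\binom{x_i}{2}^j.$$
   Context: A strict partition is a finite strictly decreasing sequence of positive integers $\lambda=(\lambda_1>\cdots>\lambda_\ell)$ (the empty sequence is allowed); $\ell(\lambda)=\ell$, and $\lambda_i=0$ for $i>\ell(\lambda)$. The (shifted Young) diagram of $\lambda$ is the set of boxes $(i,j)$ with $1\le i\le\ell(\lambda)$, $i+1\le j\le i+\lambda_i$ (row $i$, column $j$); $\lambda$ is identified with its diagram; the content of $\square=(i,j)$ is $c_\square=j-i$. An outer corner of $\lambda$ is a box of $\lambda$ whose removal leaves the diagram of a strict partition. Let $(\alpha_1,\beta_1),\dots,(\alpha_m,\beta_m)$ be the outer corners with $\alpha_1>\cdots>\alpha_m$, and $y_j=\beta_j-\alpha_j$. Set $\alpha_{m+1}=0$, $\beta_0=\ell(\lambda)+1$, and $x_i=\beta_i-\alpha_{i+1}$ for $0\le i\le m$ (inner corner contents); one has $x_0=1\le y_1<x_1<\cdots<y_m<x_m$. For $k\ge0$, $q_k(\lambda)=\sum_{i=0}^m\binom{x_i}{2}^k-\sum_{i=1}^m\binom{y_i}{2}^k$. For $1\le i\le m$, $\lambda^{i+}$ is the strict partition obtained from $\lambda$ by adding a box of content $x_i$; if $m=0$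 or $y_1>1$, $\lambda^{0+}$ is the strict partition obtained by adding a box of content $x_0=1$ (a new row of length 1), and $\lambda^{0+}$ is undefined otherwise. *)

(* Defs.v *)
From HB Require Import structures.
From mathcomp Require Import all_boot all_order all_algebra.
From mathcomp Require Import boolp.
Set Implicit Arguments. Unset Strict Implicit. Unset Printing Implicit Defensive.
Import Order.TTheory GRing.Theory Num.Theory.

Definition strict_partition (lam : seq nat) : bool :=
  sorted (fun a b => b < a) lam && all (fun a => 0 < a) lam.

(* lambda_i (1-indexed), with lambda_i = 0 for i > l(lambda). *)
Definition part (lam : seq nat) (i : nat) : nat := nth 0 lam i.-1.

(* Boxes are pairs (i, j) = (row, column). *)
Definition box := (nat * nat)%type.

Definition in_diagram (lam : seq nat) (b : box) : bool :=
  [&& 1 <= b.1, b.1 <= size lam, b.1 + 1 <= b.2 & b.2 <= b.1 + part lam b.1].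

(* Content c_box = j - i (always >= 1 for boxes of a diagram). *)
Definition content (b : box) : nat := b.2 - b.1.

Definition outer_corner (lam : seq nat) (b : box) : Prop :=
  in_diagram lam b /\
  exists mu : seq nat, strict_partition mu /\
    forall b', in_diagram mu b' = in_diagram lam b' && (b' != b).

(* The outer corners (alpha_1, beta_1), ..., (alpha_m, beta_m) listed with
   alpha_1 > ... > alpha_m (all boxes of lambda lie in rows 1..l and
   columns 1..l + lambda_1; distinct corners lie in distinct rows). *)
Definition outer_corners (lam : seq nat) : seq box :=
  [seq b <- [seq (i, j) | i <- rev (iota 1 (size lam)),
                          j <- iota 1 (size lam + head 0 lam)]
   | `[< outer_corner lam b >]].

Definition ycont (lam : seq nat) : seq nat := map content (outer_corners lam).

(* x_i = beta_i - alpha_{i+1}, 0 <= i <= m, with beta_0 = l+1, alpha_{m+1} = 0 *)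
Definition xcont (lam : seq nat) : seq nat :=
  [seq p.1 - p.2 | p <- zip ((size lam).+1 :: map snd (outer_corners lam))
                            (rcons (map fst (outer_corners lam)) 0)].

Definition qk (k : nat) (lam : seq nat) : rat :=
  (\sum_(x <- xcont lam) ('C(x, 2) ^ k)%:R - \sum_(y <- ycont lam) ('C(y, 2) ^ k)%:R)%R.

(* mu is a strict partition obtained from lambda by adding one box of
   content c (i.e. mu = lambda^{i+} when c = x_i and lambda^{i+} is defined). *)
Definition add_box (lam : seq nat) (c : nat) (mu : seq nat) : Prop :=
  strict_partition mu /\
  exists b : box, ~~ in_diagram lam b /\ content b = c /\
    forall b', in_diagram mu b' = in_diagram lam b' || (b' == b).

(* Main.v *)
Require Import Defs.
From HB Require Import structures.
From mathcomp Require Import all_boot all_order all_algebra.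
From mathcomp Require Import boolp zify ring lra.
Import Order.TTheory GRing.Theory Num.Theory.

Definition F (k n : nat) : rat := ('C(n, 2) ^ k)%:R.

Section Poly.
Local Open Scope ring_scope.

Fixpoint Pp (j : nat) : {poly rat} :=
  match j with
  | 0 => 2%:P
  | S j' => match j' with
            | 0 => 1
            | S j'' => Pp j' + 2%:R *: ('X * Pp j'')
            end
  end.

Arguments Pp : simpl never.

Lemma HX : size ('X : {poly rat}) = 2%N. Proof. by rewrite size_polyX. Qed.

Lemma Pp_size j : (size (Pp j.+1) <= j.+1)%N /\ (size (Pp j.+2) <= j.+2)%N.
Proof.
elim: j => [|j [IH1 IH2]].
  change (Pp 1) with (1 : {poly rat}); change (Pp 2) with (1 + 2%:R *: ('X * 2%:P) : {poly rat}).
  split; first by rewrite size_poly1.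
 apply: leq_trans (size_polyD _ _) _.
  rewrite geq_max size_poly1 /=. apply: leq_trans (size_scale_leq _ _) _.
  apply: leq_trans (size_polyMleq _ _) _. rewrite HX.
  set z := size _. have : (z <= 1)%N by apply: size_polyC_leq1. lia.
split=> //.
change (Pp j.+3) with (Pp j.+2 + 2%:R *: ('X * Pp j.+1)).
apply: leq_trans (size_polyD _ _) _.
rewrite geq_max; apply/andP; split; first by lia.
apply: leq_trans (size_scale_leq _ _) _.
apply: leq_trans (size_polyMleq _ _) _. rewrite HX. lia.
Qed.

Lemma Pp_eval (a b t : rat) : a + b = 1 -> a * b = - (2%:R * t) ->
  forall j, (Pp j).[t] = a ^+ j + b ^+ j.
Proof.
move=> Hab Hm.
have H : forall j, (Pp j).[t] = a ^+ j + b ^+ j /\ (Pp j.+1).[t] = a ^+ j.+1 + b ^+ j.+1.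
  elim=> [|j [IH1 IH2]].
    change (Pp 0) with (2%:P : {poly rat}); change (Pp 1) with (1 : {poly rat}).
    by split; rewrite ?hornerC ?hornerE ?expr0 ?expr1 //.
  split=> //.
  change (Pp j.+2) with (Pp j.+1 + 2%:R *: ('X * Pp j)).
  rewrite hornerD hornerZ hornerM hornerX IH1 IH2.
  have -> : a ^+ j.+2 + b ^+ j.+2 = (a + b) * (a ^+ j.+1 + b ^+ j.+1) - a * b * (a ^+ j + b ^+ j).
    rewrite !exprS; ring.
  rewrite Hab Hm; ring.
by move=> j; case: (H j).
Qed.


Lemma bin2S n : 'C(n.+1, 2) = ('C(n, 2) + n)%N.
Proof. by rewrite binS bin1. Qed.

Lemma bin2_2 n : ('C(n.+1, 2) * 2 = n.+1 * n)%N.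
Proof. elim: n => [|n IH]; first by []. rewrite bin2S mulnDl IH. lia. Qed.

Lemma poly_part k : exists xi : nat -> rat, forall d : nat,
  F k d.+2 - F k d.+1 - (F k d.+1 - F k d) =
  \sum_(j < k) xi j * ('C(d.+1, 2) ^ j)%:R.
Proof.
pose R : {poly rat} := \sum_(i < k) ('X^(k - i.+1) * Pp i.+1) *+ 'C(k, i.+1).
have HR : (size R <= k)%N.
  rewrite /R; elim/big_ind: _ => //.
  - by rewrite size_poly0.
  - move=> p q Hp Hq; apply: leq_trans (size_polyD _ _) _; rewrite geq_max Hp Hq.
    done.
  - move=> i _. rewrite -scaler_nat. apply: leq_trans (size_scale_leq _ _) _.
    apply: leq_trans (size_polyMleq _ _) _. rewrite size_polyXn.
    have [H1 _] := Pp_size i. have := ltn_ord i. lia.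
exists (fun j => R`_j) => d.
under eq_bigr do rewrite natrX.
rewrite -horner_coef_wide //.
set t : rat := ('C(d.+1, 2))%:R.
set D : rat := d%:R.
have e2 : F k d.+2 = (t + (D + 1)) ^+ k.
  by rewrite /F bin2S natrX natrD -/t /D natr1.
have e0 : F k d = (t + (- D)) ^+ k.
  rewrite /F natrX /t bin2S natrD; congr (_ ^+ _); rewrite /D; ring.
have e1 : F k d.+1 = t ^+ k by rewrite /F natrX.
have Hab : (D + 1) + (- D) = 1 by ring.
have H2 : t * 2%:R = (D + 1) * D.
  by rewrite /t /D -natrM bin2_2 natrM natr1.
have Hm : (D + 1) * (- D) = - (2%:R * t) by rewrite mulrN -H2 mulrC.
rewrite e2 e0 e1 !exprDn.
rewrite /R horner_sum.
have -> : forall x y z : rat, x - z - (z - y) = (x + y) - (z + z) by move=> *; ring.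
rewrite -big_split /= big_ord_recl /= subn0 !expr0 !mulr1 bin0 !mulr1n.
rewrite [X in X - _]addrC addrK.
apply: eq_bigr => i _.
rewrite hornerMn hornerM hornerXn (@Pp_eval _ _ _ Hab Hm) -mulrnDl mulrDr.
by rewrite /bump /=.
Qed.

End Poly.

Lemma diagE s r c : in_diagram s (r, c) = [&& 1 <= r, r < c & c <= r + part s r].
Proof.
rewrite /in_diagram /=.
case: (leqP r (size s)) => H.
  by rewrite addn1; case: (1 <= r); rewrite //= ?andbT.
rewrite /part nth_default; last by lia.
rewrite addn0 andbF. apply/esym/negbTE; apply/negP => /and3P [] *. lia.
Qed.

Lemma diagP s r c : reflect [/\ 1 <= r, r < c & c <= r + part s r] (in_diagram s (r, c)).
Proof. rewrite diagE; exact: and3P. Qed.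

Lemma part_eq s1 s2 r : 1 <= r ->
  (forall c, in_diagram s1 (r, c) = in_diagram s2 (r, c)) -> part s1 r = part s2 r.
Proof.
move=> Hr H.
have step : forall u v, (forall c, in_diagram u (r, c) -> in_diagram v (r, c)) -> part u r <= part v r.
  move=> u v Huv. case E: (part u r) => [//|p].
  have H1 : in_diagram u (r, r + p.+1) by rewrite diagE Hr E /=; apply/andP; split => //; lia.
  by have := Huv _ H1; rewrite diagE => /and3P [] *; lia.
apply/eqP; rewrite eqn_leq; apply/andP; split; apply: step => c; rewrite H //.
Qed.

Lemma strictP s : strict_partition s <->
  (forall i, i.+1 < size s -> nth 0 s i.+1 < nth 0 s i) /\ (forall i, i < size s -> 0 < nth 0 s i).
Proof.
rewrite /strict_partition; split.
  by move=> /andP [/(sortedP 0) H1 /(all_nthP 0) H2].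
by move=> [H1 H2]; apply/andP; split; [apply/(sortedP 0) | apply/(all_nthP 0)].
Qed.

Lemma part_big s r : size s < r -> part s r = 0.
Proof. move=> H; rewrite /part nth_default //; lia. Qed.

Lemma part_pos s r : strict_partition s -> 1 <= r <= size s -> 0 < part s r.
Proof. move=> /strictP [_ H] /andP [H1 H2]; apply: H; lia. Qed.

Lemma part_size s r : 1 <= r -> 0 < part s r -> r <= size s.
Proof. move=> H1 H2; case: (leqP r (size s)) => // H; move: H2; rewrite part_big //. Qed.

Lemma part_dec s r : strict_partition s -> 1 <= r <= size s -> part s r.+1 < part s r.
Proof.
move=> Hs /andP [H1 H2].
case: (ltnP r (size s)) => H3.
  case/strictP: Hs => Hd _. rewrite /part /=. have -> : r = r.-1.+1 by lia. apply: Hd. lia.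
rewrite part_big; last by lia. apply: part_pos => //; lia.
Qed.

Lemma part_le1 s r : strict_partition s -> 1 <= r -> part s r <= part s 1.
Proof.
move=> Hs; elim: r => [//|r IH] H.
case: r IH H => [//|r] IH _.
have := IH isT.
case: (leqP r.+1 (size s)) => H.
  have H' : 1 <= r.+1 <= size s by rewrite H.
  have := @part_dec s r.+1 Hs H'; lia.
rewrite (@part_big s r.+2) //. lia.
Qed.

Definition cnd (s : seq nat) (r : nat) : bool := (r == size s) || (part s r.+1 + 1 < part s r).

Lemma mk_mu s mu r : strict_partition s -> 1 <= r <= size s ->
  (forall i, 1 <= i -> i != r -> part mu i = part s i) -> part mu r = (part s r).-1 ->
  forall b', in_diagram mu b' = in_diagram s b' && (b' != (r, r + part s r)).
Proof.
move=> Hs Hr Hi Hmr [i c'].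
have Hp := @part_pos s r Hs Hr.
rewrite !diagE xpair_eqE.
case: (eqVneq i r) => [->|Hir].
  rewrite Hmr. lia.
case: (leqP 1 i) => H1; last by rewrite /=; lia.
rewrite Hi //. lia.
Qed.

Lemma ocP s r c : strict_partition s ->
  outer_corner s (r, c) <-> [/\ 1 <= r <= size s, c = r + part s r & cnd s r].
Proof.
move=> Hs; split.
- case=> Hin [mu [Hmu H]].
  move/diagP: Hin => [H1 H2 H3].
  have Hsz : r <= size s by apply: part_size; lia.
  have Hc : c = r + part s r.
    apply/eqP; rewrite eqn_leq H3 /=; apply/negP => Hlt.
    have : in_diagram mu (r, c.+1).
      rewrite H diagE xpair_eqE. lia.
    move/diagP => [_ _ Hm].
    have : in_diagram mu (r, c) by rewrite diagE; lia.
    by rewrite H eqxx andbF.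
  split => //; first by rewrite H1 Hsz.
  rewrite /cnd; case: eqP => //= Hne. apply/negP => Hn.
  have Hr2 : 1 <= r <= size s by lia.
  have Hd := @part_dec s r Hs Hr2.
  have Hr3 : 1 <= r.+1 <= size s by lia.
  have Hp1 := @part_pos s r.+1 Hs Hr3.
  have Hm1 : part mu r.+1 = part s r.+1.
    apply: part_eq => // c'; rewrite H xpair_eqE. lia.
  have Hm0a : (part s r).-1 <= part mu r.
    have : in_diagram mu (r, r + (part s r).-1) by rewrite H diagE xpair_eqE; lia.
    by rewrite diagE; lia.
  have Hm0b : part mu r < part s r.
    rewrite ltnNge; apply/negP => Hge.
    have : in_diagram mu (r, c) by rewrite diagE; lia.
    by rewrite H eqxx andbF.
  have Hr4 : 1 <= r <= size mu by apply/andP; split => //; apply: part_size; lia.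
  have := @part_dec mu r Hmu Hr4. lia.
- case=> Hr Hc Hcnd; subst c.
  have Hp := @part_pos s r Hs Hr.
  split; first by rewrite diagE; lia.
  case: (eqVneq (part s r) 1) => Hp1.
  + have Hrs : r = size s.
      move: Hcnd; rewrite /cnd; case: eqP => //= _; lia.
    exists (take r.-1 s). split.
    * have Hsz : size (take r.-1 s) = r.-1 by rewrite size_takel; lia.
      case/strictP: Hs => Hd Hpos.
      apply/strictP; rewrite Hsz; split => i Hi; rewrite !nth_take; try lia.
      - apply: Hd; lia.
      - apply: Hpos; lia.
    * apply: mk_mu => //.
      - move=> i H1 Hir. have Hsz : size (take r.-1 s) = r.-1 by rewrite size_takel; lia.
        case: (ltnP i r) => Hlt.
          by rewrite /part nth_take //; lia.
        by rewrite !part_big //; lia.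
      - rewrite Hp1 part_big // size_takel; lia.
  + exists (set_nth 0 s r.-1 (part s r).-1).
    have Hsz : size (set_nth 0 s r.-1 (part s r).-1) = size s by rewrite size_set_nth; lia.
    have Hn : forall j, nth 0 (set_nth 0 s r.-1 (part s r).-1) j = if j == r.-1 then (part s r).-1 else nth 0 s j.
      by move=> j; rewrite nth_set_nth.
    split.
    * case/strictP: (Hs) => Hd Hpos.
      apply/strictP; rewrite Hsz; split => i Hi; rewrite !Hn.
      - have := Hd i Hi. move: Hcnd; rewrite /cnd /part.
        case: (eqVneq i r.-1) => E1; case: (eqVneq i.+1 r.-1) => E2 //=; try lia.
        + subst i. have E : r.-1.+1 = r by lia. rewrite E in Hi *. lia.
        + rewrite -E2. lia.
      - case: eqP => _; last by apply: Hpos.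
        move: Hp Hp1; rewrite /part; lia.
    * apply: mk_mu => //.
      - move=> i H1 Hir. rewrite /part Hn. case: eqP => //; lia.
      - by rewrite /part Hn eqxx.
Qed.

Definition Rows (s : seq nat) : seq nat := [seq r <- rev (iota 1 (size s)) | cnd s r].

Lemma ocE s : strict_partition s ->
  outer_corners s = [seq (r, r + part s r) | r <- Rows s].
Proof.
move=> Hs; rewrite /outer_corners /Rows.
have : all (fun i => 1 <= i <= size s) (rev (iota 1 (size s))).
  apply/allP => i; rewrite mem_rev mem_iota; lia.
elim: (rev (iota 1 (size s))) => [//|i l IH] /= /andP [Hi Hl].
rewrite filter_cat IH // filter_map.
have -> : [seq x <- iota 1 (size s + head 0 s) | preim (pair i) (fun b => `[< outer_corner s b >]) x]
        = [seq x <- iota 1 (size s + head 0 s) | (x == i + part s i) && cnd s i].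
  apply: eq_in_filter => j Hj /=.
  apply/idP/idP.
    by move/asboolP/(ocP _ _ _ Hs) => [_ -> ->]; rewrite eqxx.
  move=> /andP [/eqP -> Hc]; apply/asboolP/(ocP _ _ _ Hs); split => //.
case: (cnd s i) => /=.
  have Hle := @part_le1 s i Hs.
  rewrite (@eq_filter _ _ (pred1 (i + part s i))); last by move=> x; rewrite /= andbT.
  rewrite filter_pred1_uniq ?iota_uniq //.
  rewrite mem_iota. have : part s 1 = head 0 s by rewrite /part nth0. lia.
by rewrite (@eq_filter _ _ pred0) ?filter_pred0 // => x; rewrite /= andbF.
Qed.

Definition beta (s : seq nat) (r : nat) := r + part s r.

Lemma xcontE s : strict_partition s ->
  xcont s = [seq p.1 - p.2 | p <- zip ((size s).+1 :: map (beta s) (Rows s)) (rcons (Rows s) 0)].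
Proof.
move=> Hs; rewrite /xcont ocE // -!map_comp.
by rewrite (@eq_map _ _ (fst \o _) id) ?map_id.
Qed.

Lemma ycontE s : strict_partition s -> ycont s = map (part s) (Rows s).
Proof.
move=> Hs; rewrite /ycont ocE // -map_comp; apply: eq_map => x /=.
by rewrite /content /= addKn.
Qed.

Lemma part_cons h t r : 1 <= r -> part (h :: t) r.+1 = part t r.
Proof. by case: r. Qed.

Lemma cnd_cons h t x : 1 <= x -> cnd (h :: t) x.+1 = cnd t x.
Proof. by move=> Hx; rewrite /cnd /= eqSS !part_cons. Qed.

Lemma Rows_mem s x : x \in Rows s -> 1 <= x.
Proof. by rewrite mem_filter mem_rev mem_iota => /andP [_ /andP []]. Qed.

Lemma Rows_cons h t : Rows (h :: t) =
  if cnd (h :: t) 1 then rcons (map S (Rows t)) 1 else map S (Rows t).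
Proof.
rewrite /Rows /= (iotaDl 1 1) rev_cons -map_rev filter_rcons filter_map.
congr (if _ then rcons _ _ else _); congr map; apply: eq_in_filter => x;
  rewrite mem_rev mem_iota => /andP [Hx _] /=; rewrite add1n cnd_cons //.
Qed.

Lemma zip_succ (A B : seq nat) :
  [seq p.1 - p.2 | p <- zip (map S A) (map S B)] = [seq p.1 - p.2 | p <- zip A B].
Proof. by elim: A B => [|x A IH] [|y B] //=; rewrite IH subSS. Qed.


Lemma strict_cons h t : strict_partition (h :: t) ->
  [/\ strict_partition t, 0 < h & (t != [::] -> head 0 t < h)].
Proof.
rewrite /strict_partition /= => /andP [Hp /andP [Hh Ha]].
split => //; first by rewrite (path_sorted Hp) Ha.
by case: t Hp {Ha} => [//|x t] /= /andP [].
Qed.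

Lemma rcons_sum (X : seq nat) x (G : nat -> rat) :
  (\sum_(y <- rcons X x) G y = \sum_(y <- X) G y + G x)%R.
Proof. by rewrite -cats1 big_cat big_seq1. Qed.

Lemma qk_ind k s : strict_partition s ->
  (\sum_(x <- xcont s) F k x - \sum_(y <- ycont s) F k y =
     F k 1 + \sum_(a <- s) (F k a.+1 - F k a))%R /\
  exists X, xcont s = rcons X (head 0 s).+1.
Proof.
elim: s => [|h t IH] Hs.
  rewrite xcontE // ycontE // /Rows /=.
  rewrite !big_cons !big_nil /=. split; first by rewrite subr0 addr0.
  by exists [::].
have [Ht Hh Hht] := @strict_cons h t Hs.
have [IHs [X HX]] := IH Ht.
move: IHs; rewrite xcontE // ycontE // xcontE // ycontE // Rows_cons.
move: HX; rewrite xcontE //.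
set R := Rows t.
have Hb : map (beta (h :: t)) (map S R) = map S (map (beta t) R).
  rewrite -!map_comp; apply/eq_in_map => x /Rows_mem Hx /=.
  by rewrite /beta part_cons.
have Hpt : map (part (h :: t)) (map S R) = map (part t) R.
  rewrite -!map_comp; apply/eq_in_map => x /Rows_mem Hx /=.
  by rewrite part_cons.
have [A0 [a [EA HA0]]] : exists A0 a, (size t).+1 :: map (beta t) R = rcons A0 a /\ size A0 = size R.
  exists (belast (size t).+1 (map (beta t) R)), (last (size t).+1 (map (beta t) R)).
  by rewrite -lastI size_belast size_map.
rewrite EA zip_rcons ?size_rcons // map_rcons => HX.
move/rcons_inj: HX => [HX Ha]. rewrite subn0 in Ha.
have EA' : (size (h :: t)).+1 :: map (beta (h :: t)) (map S R) = map S (rcons A0 a).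
  by rewrite Hb -EA.
case Hc: (cnd (h :: t) 1).
- rewrite map_rcons -rcons_cons EA' -(map_rcons S R 0).
  rewrite zip_rcons; last by rewrite !size_map !size_rcons HA0.
  rewrite map_rcons zip_succ zip_rcons // map_rcons HX.
  rewrite !map_rcons Hpt /=.
  rewrite !rcons_sum big_cons /= !subn0 => IHs.
  have Eb : beta (h :: t) 1 = h.+1 by rewrite /beta add1n.
  have Ep : part (h :: t) 1 = h by [].
  rewrite Eb Ep; split; [lra | by exists (rcons X a)].
- have Hh' : h = (head 0 t).+1.
    move: Hc; rewrite /cnd /=. case: t {Ht X HX IH R Hb Hpt EA EA' A0 HA0 a Ha} Hs Hht => [//|x t] Hs Hht /=.
    have := Hht isT. rewrite /part /=. lia.
  rewrite EA' map_rcons zip_rcons; last by rewrite !size_map.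
  rewrite map_rcons zip_succ HX Hpt /= !subn0.
  rewrite !rcons_sum big_cons /= => IHs.
  split; last by exists X; rewrite Hh' -Ha.
  rewrite Ha -Hh' in IHs *. lra.
Qed.

Lemma add_part lam mu b : strict_partition lam -> strict_partition mu ->
  ~~ in_diagram lam b -> (forall b', in_diagram mu b' = in_diagram lam b' || (b' == b)) ->
  exists r, [/\ 1 <= r, content b = (part lam r).+1, part mu r = (part lam r).+1 &
    forall i, 1 <= i -> i != r -> part mu i = part lam i].
Proof.
case: b => r c Hl Hm Hb H.
have : in_diagram mu (r, c) by rewrite H eqxx orbT.
move/diagP => [H1 H2 H3].
move: Hb; rewrite diagE H1 H2 /= -ltnNge => H4.
have Hc : c = r + (part lam r).+1.
  apply/eqP; rewrite eqn_leq; apply/andP; split; last by lia.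
  rewrite leqNgt; apply/negP => H5.
  have : in_diagram mu (r, c.-1) by rewrite diagE; lia.
  rewrite H diagE xpair_eqE. lia.
exists r; split => //.
- rewrite /content /= Hc. lia.
- apply/eqP; rewrite eqn_leq; apply/andP; split; last by lia.
  rewrite leqNgt; apply/negP => H5.
  have : in_diagram mu (r, r + (part lam r).+2) by rewrite diagE; lia.
  rewrite H diagE xpair_eqE. lia.
- move=> i Hi Hir; apply: part_eq => // c'.
  rewrite H xpair_eqE. have -> : (i == r) = false by apply/negbTE.
  by rewrite orbF.
Qed.

Definition G k a := (F k a.+1 - F k a)%R.

Lemma sum_part k s N : size s <= N ->
  (\sum_(a <- s) G k a = \sum_(i < N) G k (part s i.+1))%R.
Proof.
move=> HN.
rewrite (big_nth 0) big_mkord (big_ord_widen N (fun i => G k (nth 0 s i)) HN) big_mkcond.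
apply: eq_bigr => i _ /=. case: ifP => // Hi.
rewrite /part /= nth_default; last by rewrite leqNgt Hi.
by rewrite /G /F !bin_small // subrr.
Qed.

Lemma qk_eq k s : strict_partition s -> qk k s = (F k 1 + \sum_(a <- s) G k a)%R.
Proof. by move=> Hs; have [E _] := qk_ind k s Hs; exact: E. Qed.

Theorem theorem3p5 (k : nat) :
  exists xi : nat -> rat,
    forall lam : seq nat, strict_partition lam ->
    forall i : nat, i < size (xcont lam) ->
    forall mu : seq nat, add_box lam (nth 0 (xcont lam) i) mu ->
      (qk k mu - qk k lam =
       \sum_(j < k) xi j * ('C(nth 0 (xcont lam) i, 2) ^ j)%:R)%R.
Proof.
have [xi Hxi] := poly_part k.
exists xi => lam Hlam i Hi mu [Hmu [b [Hb [Hc Hd]]]].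
have [r [Hr Hcont Hmr Hoth]] := add_part _ _ _ Hlam Hmu Hb Hd.
rewrite -Hc Hcont -Hxi (qk_eq k mu Hmu) (qk_eq k lam Hlam).
have Hrs : r <= size mu by apply: part_size => //; rewrite Hmr.
have HN : r.-1 < size lam + size mu by lia.
rewrite (sum_part k mu (size lam + size mu)) ?leq_addl //.
rewrite (sum_part k lam (size lam + size mu)) ?leq_addr //.
have -> : forall a b c : rat, ((a + b) - (a + c) = b - c)%R by move=> *; ring.
rewrite -sumrB (bigD1 (Ordinal HN)) //= big1 ?addr0.
  have -> : r.-1.+1 = r by lia.
  by rewrite Hmr /G.
move=> j Hj. rewrite Hoth ?subrr //. apply/negP => /eqP Ej.
move/negP: Hj; apply; apply/eqP; apply: val_inj => /=. lia.
Qed.
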